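(* Let $a<b$ and let $X$ be a random variable taking values in $[a,b]$, with probability density function $f:[a,b]\rightarrow[0,1]$ and cumulative distribution function $F(x)=\Pr(X\le x)=\int_a^x f(t)\,dt$. Assume that $F$ is differentiable in $(a,b)$ with $F'=f\in L^1[a,b]$ and that $\gamma\le f(t)\le\Gamma$ for all $t\in[a,b]$, where $\gamma,\Gamma$ are real constants. Then for all $x\in[a,\frac{a+b}{2}]$, \[ \left|\frac{1}{2}[F(x)+F(a+b-x)]-\frac{b-E(X)}{b-a}\right|\leq \left[\frac{b-a}{4}+\left|x-\frac{3a+b}{4}\right|\right] \left(\frac{1}{b-a}-\gamma\right) \] and \[ \left|\frac{1}{2}[F(x)+F(a+b-x)]-\frac{b-E(X)}{b-a}\right|\leq \left[\frac{b-a}{4}+\left|x-\frac{3a+b}{4}\right|\right] \left(\Gamma-\frac{1}{b-a}\right), \] where $E(X)$ is the expectation of $X$. *)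

(* Defs.v *)
From HB Require Import structures.
From mathcomp Require Import all_boot all_order all_algebra.
From mathcomp Require Import all_classical all_reals all_analysis.
Set Implicit Arguments. Unset Strict Implicit. Unset Printing Implicit Defensive.
Import Order.TTheory GRing.Theory Num.Theory.
Import numFieldNormedType.Exports.
Local Open Scope classical_set_scope.
Local Open Scope ring_scope.

Definition dens_cdf {R : realType} (f : R -> R) (a x : R) : R :=
  Rintegral (@lebesgue_measure R) `[a, x] f.

Definition dens_expectation {R : realType} (f : R -> R) (a b : R) : R :=
  Rintegral (@lebesgue_measure R) `[a, b] (fun t => t * f t).

(* Main.v *)
Require Import Defs.
From HB Require Import structures.
From mathcomp Require Import all_boot all_order all_algebra.
From mathcomp Require Import all_classical all_reals all_analysis.
From mathcomp Require Import ring lra.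
From mathcomp Require Import measurable_realfun.
Import Order.TTheory GRing.Theory Num.Theory.
Import numFieldNormedType.Exports.
Local Open Scope classical_set_scope.
Local Open Scope ring_scope.
Lemma bnd_of (R : realType) (A : set R) (g : R -> R) (B : R) :
  (forall t, A t -> `|g t| <= B) -> [bounded g t | t in A].
Proof.
move=> h; exists B; split; first exact: num_real.
by move=> M /ltW BM t At; exact: le_trans (h t At) BM.
Qed.

Lemma muI (R : realType) (a b : R) : a <= b ->
  (@lebesgue_measure R) `[a, b] = (b - a)%:E.
Proof.
move=> ab; rewrite lebesgue_measure_itv /= lte_fin.
by case: ltgtP ab => //= -> _; rewrite subrr.
Qed.

Lemma intC (R : realType) (a b : R) (g : R -> R) (B : R) : a <= b ->
  measurable_fun `[a, b] g -> (forall t, a <= t <= b -> `|g t| <= B) ->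
  (@lebesgue_measure R).-integrable `[a, b] (EFin \o g).
Proof.
move=> ab mg hg; apply: measurable_bounded_integrable => //.
  have h := @muI _ _ _ ab; set m := (X in (X < _)%E); have -> : m = (b - a)%:E by exact: h.
  exact: ltry.
apply: (@bnd_of _ _ _ B) => t /= It; apply: hg; move: It; by rewrite in_itv.
Qed.

Lemma intM (R : realType) (a b : R) (f g : R -> R) (B : R) :
  (@lebesgue_measure R).-integrable `[a, b] (EFin \o f) ->
  measurable_fun `[a, b] g -> (forall t, a <= t <= b -> `|g t| <= B) ->
  (@lebesgue_measure R).-integrable `[a, b] (EFin \o (fun t => g t * f t)).
Proof.
move=> hf mg hg.
have bg : [bounded g t | t in `[a, b]].
  by apply: (@bnd_of _ _ _ B) => t /= It; apply: hg; move: It; rewrite in_itv.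
have := @integrableMr _ _ _ (@lebesgue_measure R) _ (measurable_itv _) _ _ mg bg hf.
by apply: eq_integrable => // t _ /=; rewrite EFinM.
Qed.

Lemma intD (R : realType) (A : set R) (u v : R -> R) : measurable A ->
  (@lebesgue_measure R).-integrable A (EFin \o u) ->
  (@lebesgue_measure R).-integrable A (EFin \o v) ->
  (@lebesgue_measure R).-integrable A (EFin \o (fun t => u t + v t)).
Proof.
move=> mA hu hv; have := @integrableD _ _ _ (@lebesgue_measure R) _ mA _ _ hu hv.
by apply: eq_integrable => // t _ /=; rewrite EFinD.
Qed.

Lemma intB (R : realType) (A : set R) (u v : R -> R) : measurable A ->
  (@lebesgue_measure R).-integrable A (EFin \o u) ->
  (@lebesgue_measure R).-integrable A (EFin \o v) ->
  (@lebesgue_measure R).-integrable A (EFin \o (fun t => u t - v t)).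
Proof.
move=> mA hu hv; have := @integrableB _ _ _ (@lebesgue_measure R) _ mA _ _ hu hv.
by apply: eq_integrable => // t _ /=; rewrite EFinB.
Qed.

Lemma intZ (R : realType) (A : set R) (u : R -> R) (k : R) : measurable A ->
  (@lebesgue_measure R).-integrable A (EFin \o u) ->
  (@lebesgue_measure R).-integrable A (EFin \o (fun t => k * u t)).
Proof.
move=> mA hu; have := @integrableZl _ _ _ (@lebesgue_measure R) _ mA k _ hu.
by apply: eq_integrable => // t _ /=; rewrite EFinM.
Qed.
Lemma cdf_ind (R : realType) (a b c : R) (g : R -> R) : c <= b ->
  Rintegral (@lebesgue_measure R) `[a, c] g =
  Rintegral (@lebesgue_measure R) `[a, b] (fun t => \1_`[a, c] t * g t).
Proof.
move=> cb.
transitivity (Rintegral (@lebesgue_measure R) (`[a, b] `&` `[a, c]) g).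
  congr Rintegral; apply/seteqP; split => t /=; rewrite !in_itv /=.
    by move/andP => [-> tc]; rewrite tc (le_trans tc cb).
  by move=> [_ /andP[-> ->]].
rewrite (@Rintegral_mkcondr _ _ _ (@lebesgue_measure R)).
apply: eq_Rintegral => t _; rewrite patchE indicE.
by case: (t \in _); rewrite ?mul1r ?mul0r.
Qed.
Notation LM := (@lebesgue_measure _).

Lemma absKh (R : realType) (a b M : R) (K h : R -> R) : a <= b ->
  measurable_fun `[a, b] K -> (forall t, a <= t <= b -> `|K t| <= M) ->
  (@lebesgue_measure R).-integrable `[a, b] (EFin \o h) ->
  (forall t, a <= t <= b -> 0 <= h t) ->
  `| Rintegral (@lebesgue_measure R) `[a, b] (fun t => K t * h t) |
    <= M * Rintegral (@lebesgue_measure R) `[a, b] h.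
Proof.
move=> ab mK hK ih h0.
have iKh := @intM _ _ _ _ _ _ ih mK hK.
have iMh := @intZ _ _ h M (measurable_itv _) ih.
rewrite -(@RintegralZl _ _ _ (@lebesgue_measure R) _ h M (measurable_itv _) ih).
have iNMh := @intZ _ _ _ (-1) (measurable_itv `[a, b]) iMh.
rewrite ler_norml; apply/andP; split.
  rewrite -mulN1r -(@RintegralZl _ _ _ (@lebesgue_measure R) _ _ (-1) (measurable_itv _) iMh).
  apply: (@le_Rintegral _ _ _ (@lebesgue_measure R) _ _ _ (measurable_itv _) iNMh iKh).
  move=> t /=; rewrite in_itv /= => Ht.
  have /ler_normlP[h1 h2] := hK t Ht; have := h0 t Ht.
  rewrite mulN1r; nra.
apply: (@le_Rintegral _ _ _ (@lebesgue_measure R) _ _ _ (measurable_itv _) iKh iMh).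
move=> t /=; rewrite in_itv /= => Ht.
have /ler_normlP[h1 h2] := hK t Ht; have := h0 t Ht.
nra.
Qed.
Lemma Rint_id (R : realType) (a b : R) : a < b ->
  Rintegral (@lebesgue_measure R) `[a, b] (fun t => t) = (b ^+ 2 - a ^+ 2) / 2.
Proof.
move=> ab; rewrite /Rintegral.
rewrite (@continuous_FTC2 _ (fun t => t) (fun t => t ^+ 2 * 2^-1))//=.
- by rewrite mulrBl.
- by apply: continuous_subspaceT => t; exact: cvg_id.
- split.
  + by move=> t _; apply: derivableM => //; exact: exprn_derivable.
  + by apply: cvg_at_right_filter; apply: cvgM; [exact: exprn_continuous|exact: cvg_cst].
  + by apply: cvg_at_left_filter; apply: cvgM; [exact: exprn_continuous|exact: cvg_cst].
- move=> t _; rewrite derive1Mr; last exact: exprn_derivable.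
  by rewrite exp_derive1 /= expr1 -mulr_natl mulrAC divff ?mul1r // pnatr_eq0.
Qed.

Lemma bnd_t (R : realType) (a b t : R) : a <= t <= b -> `|t| <= `|a| + `|b|.
Proof.
move=> /andP[h1 h2]; rewrite ler_norml.
have := ler_norm b; have := ler_norm (-a); rewrite normrN => h3 h4.
have := normr_ge0 a; have := normr_ge0 b => h5 h6.
apply/andP; split; lra.
Qed.

Lemma bnd_ind (R : realType) (A : set R) (t : R) : `|\1_A t| <= 1 :> R.
Proof. by rewrite indicE; case: (_ \in _); rewrite ?normr1 ?normr0. Qed.

Lemma int_ind (R : realType) (a b c : R) : a <= c <= b ->
  Rintegral (@lebesgue_measure R) `[a, b] (\1_`[a, c]) = c - a.
Proof.
move=> /andP[ac cb].
have := @cdf_ind R a b c (fun _ => 1) cb.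
rewrite (@Rintegral_cst _ _ _ (@lebesgue_measure R)); last exact: measurable_itv.
rewrite mul1r.
set m := fine _; have -> : m = c - a by exact: (congr1 fine (@muI _ _ _ ac)).
move=> ->.
by apply: eq_Rintegral => t _; rewrite mulr1.
Qed.

Lemma int_cst (R : realType) (a b c : R) : a <= b ->
  Rintegral (@lebesgue_measure R) `[a, b] (fun _ => c) = c * (b - a).
Proof.
move=> ab; rewrite (@Rintegral_cst _ _ _ (@lebesgue_measure R)); last exact: measurable_itv.
set m := fine _; have -> : m = b - a by exact: (congr1 fine (@muI _ _ _ ab)).
by [].
Qed.

Theorem theorem4p1 (R : realType) (a b gamma Gamma : R) (f : R -> R)
  (hab : a < b)
  (hf01 : forall t, a <= t <= b -> 0 <= f t <= 1)
  (hfint : (@lebesgue_measure R).-integrable `[a, b] (EFin \o f))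
  (hdens : Rintegral (@lebesgue_measure R) `[a, b] f = 1)
  (hderiv : forall x, a < x < b -> is_derive x 1 (dens_cdf f a) (f x))
  (hbounds : forall t, a <= t <= b -> gamma <= f t <= Gamma) :
  forall x, a <= x <= (a + b) / 2 ->
    `| (dens_cdf f a x + dens_cdf f a (a + b - x)) / 2
       - (b - dens_expectation f a b) / (b - a) |
      <= ((b - a) / 4 + `| x - (3 * a + b) / 4 |) * ((b - a)^-1 - gamma)
    /\
    `| (dens_cdf f a x + dens_cdf f a (a + b - x)) / 2
       - (b - dens_expectation f a b) / (b - a) |
      <= ((b - a) / 4 + `| x - (3 * a + b) / 4 |) * (Gamma - (b - a)^-1).
Proof.
move=> x /andP[ax xm].
have hab' : a <= b by exact: ltW.
have hba : 0 < b - a by rewrite subr_gt0.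
have hba0 : b - a != 0 by rewrite gt_eqF.
have xb : x <= b by lra.
set y := a + b - x.
have ay : a <= y by rewrite /y; lra.
have yb : y <= b by rewrite /y; lra.
have mI : measurable (`[a, b] : set R) by exact: measurable_itv.
pose Ix : R -> R := \1_`[a, x].
pose Iy : R -> R := \1_`[a, y].
have mIx : measurable_fun `[a, b] Ix by apply: measurable_indic; exact: measurable_itv.
have mIy : measurable_fun `[a, b] Iy by apply: measurable_indic; exact: measurable_itv.
have bIx : forall t, a <= t <= b -> `|Ix t| <= 1 by move=> t _; exact: bnd_ind.
have bIy : forall t, a <= t <= b -> `|Iy t| <= 1 by move=> t _; exact: bnd_ind.
pose K t := 2^-1 * (Ix t + Iy t) - (b - a)^-1 * (b - t).
set M := (b - a) / 4 + `| x - (3 * a + b) / 4 |.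
have mK : measurable_fun `[a, b] K.
  apply: measurable_funB; apply: measurable_funM; try exact: measurable_cst.
    exact: measurable_funD.
  by apply: measurable_funB; [exact: measurable_cst|exact: measurable_id].
have bK : forall t, a <= t <= b -> `|K t| <= M / (b - a).
  move=> t /andP[hat htb].
  have -> : K t = ((Ix t + Iy t) * (b - a) / 2 - (b - t)) / (b - a).
    by rewrite /K; field.
  rewrite normf_div (gtr0_norm hba) ler_pM2r ?invr_gt0 //.
  have h1 := ler_norm (x - (3 * a + b) / 4).
  have h2 := ler_norm (- (x - (3 * a + b) / 4)); rewrite normrN in h2.
  rewrite /Ix /Iy !indicE !mem_setE !in_itv /= hat /=.
  case: (lerP t x) => htx; case: (lerP t y) => hty /=;
    rewrite ?mulr1n ?mulr0n ler_norml /M; apply/andP; split; rewrite /y in hty *; lra.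

have iKf := @intM _ _ _ _ _ _ hfint mK bK.
have iK := @intC _ _ _ _ _ hab' mK bK.
have iIxf := @intM _ _ _ _ _ _ hfint mIx bIx.
have iIyf := @intM _ _ _ _ _ _ hfint mIy bIy.
have iIx := @intC _ _ _ _ _ hab' mIx bIx.
have iIy := @intC _ _ _ _ _ hab' mIy bIy.
have mid : measurable_fun `[a, b] (fun t : R => t) by exact: measurable_id.
have bid : forall t, a <= t <= b -> `|t| <= `|a| + `|b| by move=> t; exact: bnd_t.
have itf := @intM _ _ _ _ _ _ hfint mid bid.
have iid := @intC _ _ _ _ _ hab' mid bid.
have mcst : forall c : R, measurable_fun `[a, b] (fun _ : R => c) by move=> c; exact: measurable_cst.
have icst : forall c : R, (@lebesgue_measure R).-integrable `[a, b] (EFin \o (fun _ : R => c)).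
  move=> c; apply: (@intC _ _ _ _ `|c| hab' (mcst c)) => t _; exact: lexx.
have ibf := @intZ _ _ _ b mI hfint.
pose D := (dens_cdf f a x + dens_cdf f a y) / 2 - (b - dens_expectation f a b) / (b - a).
have RD := @RintegralD _ _ _ (@lebesgue_measure R) _ _ _ mI.
have RB := @RintegralB _ _ _ (@lebesgue_measure R) _ _ _ mI.
have RZ := @RintegralZl _ _ _ (@lebesgue_measure R) _ _ _ mI.
have hD : Rintegral (@lebesgue_measure R) `[a, b] (fun t => K t * f t) = D.
  rewrite (@eq_Rintegral _ _ _ (@lebesgue_measure R) _
    (fun t => 2^-1 * (Ix t * f t + Iy t * f t) - (b - a)^-1 * (b * f t - t * f t))); last first.
    by move=> t _; rewrite /K; ring.
  rewrite RB; [|exact: @intZ _ _ _ _ mI (@intD _ _ _ _ mI iIxf iIyf)|exact: @intZ _ _ _ _ mI (@intB _ _ _ _ mI ibf itf)].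
  rewrite RZ; last exact: @intD _ _ _ _ mI iIxf iIyf.
  rewrite RZ; last exact: @intB _ _ _ _ mI ibf itf.
  rewrite RD // RB // RZ // hdens.
  rewrite /D (_ : dens_cdf f a x = Rintegral (@lebesgue_measure R) `[a, b] (fun t => Ix t * f t)); last exact: cdf_ind.
  rewrite (_ : dens_cdf f a y = Rintegral (@lebesgue_measure R) `[a, b] (fun t => Iy t * f t)); last exact: cdf_ind.
  rewrite /dens_expectation.
  by rewrite mulr1; field.
have hK0 : Rintegral (@lebesgue_measure R) `[a, b] K = 0.
  rewrite /K RB; [|exact: @intZ _ _ _ _ mI (@intD _ _ _ _ mI iIx iIy)|exact: @intZ _ _ _ _ mI (@intB _ _ _ _ mI (icst b) iid)].
  rewrite RZ; last exact: @intD _ _ _ _ mI iIx iIy.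
  rewrite RZ; last exact: @intB _ _ _ _ mI (icst b) iid.
  rewrite RD // RB //.
  rewrite (@int_ind _ a b x) ?ax ?xb // (@int_ind _ a b y) ?ay ?yb //.
  rewrite int_cst // Rint_id //.
  by rewrite /y; field.
have key : forall c, D = Rintegral (@lebesgue_measure R) `[a, b] (fun t => K t * (f t - c)).
  move=> c.
  rewrite (@eq_Rintegral _ _ _ (@lebesgue_measure R) _
    (fun t => K t * f t - c * K t)); last by move=> t _; ring.
  by rewrite RB; [rewrite RZ // hK0 mulr0 subr0 hD|exact: iKf|exact: @intZ _ _ _ _ mI iK].
have bfc : forall c, a <= c <= b ->
   Rintegral (@lebesgue_measure R) `[a, b] (fun t => f t - gamma) = 1 - gamma * (b - a).
  move=> c _; by rewrite RB // hdens int_cst.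
have ifg := @intB _ _ _ _ mI hfint (icst gamma).
have iGf := @intB _ _ _ _ mI (icst Gamma) hfint.
rewrite -/D; split.
  rewrite (key gamma).
  apply: le_trans (@absKh _ a b (M / (b - a)) K (fun t => f t - gamma) hab' mK bK ifg _) _.
    by move=> t Ht; have /andP[h1 h2] := hbounds t Ht; rewrite subr_ge0.
  rewrite RB // hdens int_cst // le_eqVlt; apply/orP; left; apply/eqP.
  by field.
rewrite (key Gamma).
rewrite (@eq_Rintegral _ _ _ (@lebesgue_measure R) _
    (fun t => (-1 * K t) * (Gamma - f t))); last by move=> t _; ring.
have mK' : measurable_fun `[a, b] (fun t => -1 * K t).
  by apply: measurable_funM => //; exact: measurable_cst.
have bK' : forall t, a <= t <= b -> `|-1 * K t| <= M / (b - a).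
  by move=> t Ht; rewrite normrM normrN1 mul1r; exact: bK.
apply: le_trans (@absKh _ a b (M / (b - a)) _ (fun t => Gamma - f t) hab' mK' bK' iGf _) _.
  by move=> t Ht; have /andP[h1 h2] := hbounds t Ht; rewrite subr_ge0.
rewrite RB // hdens int_cst // le_eqVlt; apply/orP; left; apply/eqP.
by field.
Qed.
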